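(* Let $f:\mathbb{R}^n\to\mathbb{R}$ be a continuous loss function which is $\mu$-strongly convex and $L$-smooth, with global minimum $w^*$. Then every sequence $(w_i)$ generated by the Loss-Guarded L2O algorithm using deterministic gradient descent with step size $\frac{\alpha}{L}$, $\alpha\in\,]0,\min(2,2\mu L)[$, as the guarding mechanism converges to $w^*$: $\lim_{i\to\infty}w_i=w^*$.
   Context: Loss-Guarded L2O algorithm with deterministic gradient descent: at each step $i$, an arbitrary black-box rule proposes a point $y_i$, the fallback proposes $z_i=w_i-\frac{\alpha}{L}\nabla f(w_i)$, and $w_{i+1}=y_i$ if $f(y_i)<f(z_i)$, otherwise $w_{i+1}=z_i$. $L$-smooth: $f(y)\le f(x)+\langle\nabla f(x),y-x\rangle+\frac{L}{2}\|y-x\|_2^2$; $\mu$-strongly convex: $f(y)\ge f(x)+\langle\nabla f(x),y-x\rangle+\frac{\mu}{2}\|y-x\|_2^2$, for all $x,y$. *)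

(* Defs.v *)
From HB Require Import structures.
From mathcomp Require Import all_boot all_order all_algebra.
From mathcomp Require Import all_classical all_reals all_analysis.
Set Implicit Arguments. Unset Strict Implicit. Unset Printing Implicit Defensive.
Import Order.TTheory GRing.Theory Num.Theory.
Import numFieldNormedType.Exports.
Local Open Scope ring_scope.

Section Defs.
Variables (R : realType) (n : nat).

Definition dotp (x y : 'rV[R]_n) : R := \sum_(i < n) x ord0 i * y ord0 i.
Definition norm2sq (x : 'rV[R]_n) : R := dotp x x.

Definition grad (f : 'rV[R]_n -> R) (x : 'rV[R]_n) : 'rV[R]_n :=
  \row_(i < n) derive f x (delta_mx ord0 i : 'rV[R]_n).

Definition L_smooth (f : 'rV[R]_n -> R) (L : R) : Prop :=
  forall x y, f y <= f x + dotp (grad f x) (y - x) + L / 2 * norm2sq (y - x).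

Definition strongly_convex (f : 'rV[R]_n -> R) (mu : R) : Prop :=
  forall x y, f y >= f x + dotp (grad f x) (y - x) + mu / 2 * norm2sq (y - x).

Definition gd_step (f : 'rV[R]_n -> R) (alpha L : R) (w : 'rV[R]_n) : 'rV[R]_n :=
  w - (alpha / L) *: grad f w.

Definition loss_guarded_seq (f : 'rV[R]_n -> R) (alpha L : R)
    (y w : nat -> 'rV[R]_n) : Prop :=
  forall i, w i.+1 = if f (y i) < f (gd_step f alpha L (w i))
                     then y i else gd_step f alpha L (w i).

End Defs.

(* Main.v *)
Require Import Defs.
From HB Require Import structures.
From mathcomp Require Import all_boot all_order all_algebra.
From mathcomp Require Import all_classical all_reals all_analysis.
From mathcomp Require Import ring lra.
Import Order.TTheory GRing.Theory Num.Theory.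
Import numFieldNormedType.Exports.
Local Open Scope ring_scope.
Local Open Scope classical_set_scope.

Section H.
Variables (R : realType) (n : nat).
Implicit Types (g v : 'rV[R]_n).

Lemma dotpNZ g t : dotp g (-(t *: g)) = - t * norm2sq g.
Proof.
rewrite /norm2sq /dotp mulNr mulr_sumr -sumrN; apply: eq_bigr => i _.
by rewrite !mxE; lra.
Qed.

Lemma norm2sqNZ g t : norm2sq (-(t *: g)) = t ^+ 2 * norm2sq g.
Proof.
rewrite /norm2sq /dotp mulr_sumr; apply: eq_bigr => i _.
rewrite !mxE; ring.
Qed.

Lemma norm2sq_ge0 g : 0 <= norm2sq g.
Proof. by apply: sumr_ge0 => i _; rewrite -expr2 sqr_ge0. Qed.

Lemma dotp0l v : dotp 0 v = 0.
Proof. by rewrite /dotp big1 // => i _; rewrite mxE mul0r. Qed.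

Lemma norm2sq_le0 g : norm2sq g <= 0 -> g = 0.
Proof.
move=> h; have h0 : norm2sq g = 0 by apply/le_anti; rewrite h norm2sq_ge0.
apply/rowP => j; rewrite mxE.
move: h0; rewrite /norm2sq /dotp => /eqP; rewrite psumr_eq0; last first.
  by move=> i _; rewrite -expr2 sqr_ge0.
move=> /allP /(_ j (mem_index_enum _)) /=.
by rewrite mulf_eq0 orbb => /eqP.
Qed.

Lemma entry_le g j : g ord0 j ^+ 2 <= norm2sq g.
Proof.
rewrite /norm2sq /dotp (bigD1 j) //= expr2 lerDl.
by apply: sumr_ge0 => i _; rewrite -expr2 sqr_ge0.
Qed.

Lemma sub_step x (a : 'rV[R]_n) : x - a - x = - a.
Proof. by rewrite addrAC subrr add0r. Qed.
End H.

Lemma sq_expand (R : realType) (n : nat) (g d : 'rV[R]_n) (mu : R) :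
  0 <= norm2sq g + 2 * mu * dotp g d + mu ^+ 2 * norm2sq d.
Proof.
have : 0 <= norm2sq (g + mu *: d) by exact: norm2sq_ge0.
suff -> : norm2sq (g + mu *: d) = norm2sq g + 2 * mu * dotp g d + mu ^+ 2 * norm2sq d by [].
rewrite /norm2sq /dotp !mulr_sumr -!big_split /=; apply: eq_bigr => i _.
rewrite !mxE; ring.
Qed.

Section D.
Variables (R : realType) (n : nat).
Lemma descent (f : 'rV[R]_n -> R) (mu L alpha : R) wstar x :
  0 < mu -> 0 < L -> 0 < alpha -> alpha < 2 ->
  strongly_convex f mu -> L_smooth f L -> (forall x, f wstar <= f x) ->
  f (gd_step f alpha L x) - f wstar <=
   (1 - 2 * mu * (alpha / L * (1 - alpha / 2))) * (f x - f wstar).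
Proof.
move=> mu0 L0 a0 a2 sc ls fmin.
set fstar := f wstar.
set g := grad f x; set G := norm2sq g.
have G0 : 0 <= G by exact: norm2sq_ge0.
have A := ls x (gd_step f alpha L x).
rewrite /gd_step sub_step dotpNZ norm2sqNZ -/g -/G in A.
have B := sc x wstar.
rewrite -/g -/fstar in B.
have Q : 0 <= G + 2 * mu * dotp g (wstar - x) + mu ^+ 2 * norm2sq (wstar - x).
  exact: sq_expand.
have e1 : L / 2 * ((alpha / L) ^+ 2 * G) = alpha / L * G - alpha / L * (1 - alpha / 2) * G.
  by field; rewrite gt_eqF.
rewrite e1 in A.
set k := alpha / L * (1 - alpha / 2).
have k0 : 0 <= k.
  apply: mulr_ge0; first by apply: divr_ge0; apply: ltW.
  rewrite subr_ge0 ler_pdivrMr // mul1r; lra.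
have HG : 2 * mu * (f x - fstar) <= G.
  set D := dotp g (wstar - x) in B Q; set N := norm2sq (wstar - x) in B Q.
  have h : f x - fstar <= - D - mu / 2 * N by lra.
  have h2 : 0 <= 2 * mu by rewrite mulr_ge0 // ltW.
  have := ler_wpM2l h2 h.
  have -> : 2 * mu * (- D - mu / 2 * N) = - (2 * mu * D) - mu ^+ 2 * N by field.
  move=> h'; apply: le_trans h' _.
  move: Q; generalize (2 * mu * D) (mu ^+ 2 * N) => a b.
  lra.
have HK := ler_wpM2l k0 HG.
rewrite -/k in A.
have -> : (1 - 2 * mu * k) * (f x - fstar) = (f x - fstar) - k * (2 * mu * (f x - fstar)) by ring.
rewrite /gd_step. lra.
Qed.
End D.

Theorem theorem3 (R : realType) (n : nat) (f : 'rV[R]_n -> R) (mu L alpha : R)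
  (wstar : 'rV[R]_n) (y w : nat -> 'rV[R]_n) :
  continuous f ->
  (forall x, differentiable f x) ->
  0 < mu -> 0 < L ->
  strongly_convex f mu -> L_smooth f L ->
  (forall x, f wstar <= f x) ->
  0 < alpha -> alpha < Num.min 2 (2 * mu * L) ->
  loss_guarded_seq f alpha L y w ->
  w @ \oo --> wstar.
Proof.
move=> _ _ mu0 L0 sc ls fmin a0 /[dup] amin; rewrite lt_min => /andP[a2 _] lg.
set k := alpha / L * (1 - alpha / 2).
have k0 : 0 < k.
  apply: mulr_gt0; first by apply: divr_gt0.
  by rewrite subr_gt0 ltr_pdivrMr // mul1r.
set c := 1 - 2 * mu * k.
set c' := Num.max c 0.
have c'0 : 0 <= c' by rewrite le_max lexx orbT.
have c'1 : c' < 1.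
  have h : 0 < 2 * mu * k by apply: mulr_gt0 => //; apply: mulr_gt0.
  rewrite /c' gt_max ltr01 andbT /c; lra.
set d := fun i => f (w i) - f wstar.
have d0 : forall i, 0 <= d i by move=> i; rewrite /d subr_ge0.
have dstep : forall i, d i.+1 <= c' * d i.
  move=> i; rewrite /d lg.
  have H := @descent R n f mu L alpha wstar (w i) mu0 L0 a0 a2 sc ls fmin.
  have Hc : c * d i <= c' * d i by apply: ler_wpM2r; [exact: d0 | rewrite le_max lexx].
  apply: le_trans Hc; apply: le_trans H.
  case: ifP => // /ltW h; by rewrite lerD2r.
have dgeo : forall i, d i <= c' ^+ i * d 0.
  elim=> [|i IH]; first by rewrite expr0 mul1r.
  apply: (le_trans (dstep i)); rewrite exprS -mulrA; exact: ler_wpM2l.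
have g0 : grad f wstar = 0.
  apply: norm2sq_le0.
  have A := ls wstar (wstar - L^-1 *: grad f wstar).
  rewrite sub_step dotpNZ norm2sqNZ in A.
  have e : - L^-1 * norm2sq (grad f wstar) + L / 2 * (L^-1 ^+ 2 * norm2sq (grad f wstar))
           = - (L^-1 / 2 * norm2sq (grad f wstar)) by field; rewrite gt_eqF.
  rewrite -addrA e in A.
  have C := fmin (wstar - L^-1 *: grad f wstar).
  have : L^-1 / 2 * norm2sq (grad f wstar) <= 0.
    move: A C; generalize (L^-1 / 2 * norm2sq (grad f wstar)) => a; lra.
  by rewrite pmulr_rle0 // divr_gt0 // invr_gt0.
have Nb : forall i, mu / 2 * norm2sq (w i - wstar) <= d i.
  move=> i; have B := sc wstar (w i); rewrite g0 dotp0l addr0 in B.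
  rewrite /d; lra.
apply/cvgrPdistC_lt => e e0.
have cv := @cvg_expr R c'.
have /cvgrPdist_lt cv2 : (GRing.exp c' : R ^nat) @ \oo --> 0.
  by apply: cv; rewrite ger0_norm.
have epos : 0 < mu * e ^+ 2 / (2 * (d 0 + 1)).
  by rewrite divr_gt0 ?mulr_gt0 ?exprn_gt0 // ltr_wpDl // d0.
have := cv2 _ epos; apply: filterS => i hi.
rewrite sub0r normrN ger0_norm ?exprn_ge0 // in hi.
set v := w i - wstar.
have Nv : norm2sq v < e ^+ 2.
  have h1 := Nb i; have h2 := dgeo i.
  have h3 : c' ^+ i * d 0 <= c' ^+ i * (d 0 + 1) by rewrite ler_wpM2l ?exprn_ge0 // lerDl.
  have h4 : c' ^+ i * (d 0 + 1) < mu * e ^+ 2 / (2 * (d 0 + 1)) * (d 0 + 1).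
    by rewrite ltr_pM2r // ltr_wpDl // d0.
  have e4 : mu * e ^+ 2 / (2 * (d 0 + 1)) * (d 0 + 1) = mu / 2 * e ^+ 2.
    field; apply/lt0r_neq0; rewrite ltr_wpDl // d0.
  rewrite e4 in h4.
  have : mu / 2 * norm2sq v < mu / 2 * e ^+ 2 by lra.
  by rewrite ltr_pM2l // divr_gt0.
change (mx_norm v < e).
have [->|nz] := eqVneq (mx_norm v) 0; first exact: e0.
have [[a j] ->] := mx_norm_neq0 nz.
rewrite /= (ord1 a).
have := le_lt_trans (@entry_le R n v j) Nv.
rewrite -real_normK ?num_real // => h.
move: h (normr_ge0 (v 0 j)) e0; generalize `|v 0 j| => z; nra.
Qed.
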